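(* Let $\pi$ be a supercuspidal representation of $G$ with trivial central character and $a(\pi)=4n$, $n\ge1$, let $T=T_\alpha$ be an inert torus in canonical form, and let $W_0\in\mathcal W(\pi,\psi)$ be a minimal vector for $T$ in the Whittaker model of $\pi$. Put $\mathfrak a=-a_{\theta_\pi,T}\alpha\in\mathfrak o^\times$. Then there is a constant $c\in\mathbb{C}$ such that for all $y\in F^\times$, $W_0(a(y))=c$ if $y\in\varpi^{-2n}\mathfrak aU_n$ and $W_0(a(y))=0$ otherwise.
   Context: $F$ is a non-archimedean local field of characteristic zero with ring of integers $\mathfrak o$, maximal ideal $\mathfrak p$, uniformizer $\varpi$, odd residue cardinality; $U_m=\{x\in\mathfrak o^\times:v(x-1)\ge m\}$; $E$ the unramified quadratic extension; $G=\mathrm{GL}_2(F)$, $Z$ its centre, $a(y)=\mathrm{diag}(y,1)$, $n(x)=\begin{pmatrix}1&x\\0&1\end{pmatrix}$. $\psi$ is an additive character of $F$ trivial on $\mathfrak o$ but not $\varpi^{-1}\mathfrak o$, $\psi_E=\psi\circ\mathrm{Tr}_{E/F}$. $\mathcal W(\pi,\psi)$ is the Whittaker model: the unique space of functions $W$ on $G$ with $W(n(x)g)=\psi(x)W(g)$, stable under right translation, realizing $\pi$. $a(\pi)$ is the least $r\ge0$ such that $\pi$ has a nonzero vector fixed by $\mathrm{GL}_2(\mathfrak o)\cap\begin{pmatrix}1+\mathfrak p^r&\mathfrak o\\\mathfrak p^r&\mathfrak o\end{pmatrix}$; for a character $\chi$ of $E^\times$, $a(\chi)$ is the least $m\ge0$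 with $\chi$ trivial on $\{x\in\mathfrak o_E^\times:v(x-1)\ge m\}$. Inert torus in canonical form: $T=T_\alpha=\{\begin{pmatrix}x&y\\-\alpha y&x\end{pmatrix}\ne0\}$, $\alpha\in\mathfrak o^\times$, $-\alpha$ non-square, identified with $E^\times$ via $x+y\sqrt{-\alpha}\mapsto\begin{pmatrix}x&y\\-\alpha y&x\end{pmatrix}$; $w_\alpha=\begin{pmatrix}0&1\\-\alpha&0\end{pmatrix}$; $K(n)=\{g\in\mathrm{GL}_2(\mathfrak o):g\equiv1\bmod\mathfrak p^n\}$; $K_T(n)=\{\begin{pmatrix}a&b\\c&d\end{pmatrix}\in\mathrm{GL}_2(\mathfrak o):a-d,\ c+b\alpha\in\mathfrak p^n\}$, $ZK_T(n)=TK(n)$. For $\theta$ a character of $E^\times$ with $a(\theta)=2n$, $\theta|_{F^\times}=1$, $a_{\theta,T}\in\mathfrak o^\times$ is a fixed element with $\psi_E(\varpi^{-n}a_{\theta,T}\sqrt{-\alpha}u)=\theta(1+\varpi^nu)$ for $u\in\mathfrak o_E$, and $\chi_{\theta,T}(t(1+\varpi^ng))=\theta(t)\psi(\varpi^{-n}a_{\theta,T}\mathrm{Tr}(w_\alpha g))$ is a character of $ZK_T(n)$. There is a character $\theta_\pi$ of $E^\times$ with $a(\theta_\pi)=2n$, $\theta_\pi|_{F^\times}=1$ and $\pi\simeq c\text{-}\mathrm{Ind}_{ZK_T(n)}^G\chi_{\theta_\pi,T}$ for all such $T$; fix it. A minimal vector for $T$ is a nonzero $v\in\pi$ with $\pi(k)v=\chi_{\theta_\pi,T}(k)v$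 for all $k\in ZK_T(n)$. *)

(* Defs.v *)
From mathcomp Require Import all_boot all_order all_algebra.
From mathcomp Require Import complex.
From mathcomp Require Import Rstruct.
Set Implicit Arguments. Unset Strict Implicit. Unset Printing Implicit Defensive.
Import Order.TTheory GRing.Theory Num.Theory.
Local Open Scope ring_scope.

Definition C := complex Rdefinitions.R.

Section LocalDefs.
Variable F : fieldType.

(* valuation data: v : F -> int is meaningful on F^x; [vge v x m] means v(x) >= m,
   with the convention v(0) = +oo *)
Definition vge (v : F -> int) (x : F) (m : int) : bool := (x == 0) || (m <= v x).

(* F is a non-archimedean local field of characteristic zero, with normalized
   discrete valuation v, uniformizer w, complete, finite residue field of odd cardinality *)
Record nonarch_local_field (v : F -> int) (w : F) : Prop := {
  nlf_char0 : [pchar F] =i pred0;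
  nlf_mul : forall x y, x != 0 -> y != 0 -> v (x * y) = v x + v y;
  nlf_add : forall x y m, vge v x m -> vge v y m -> vge v (x + y) m;
  nlf_unif_nz : w != 0;
  nlf_unif : v w = 1;
  nlf_complete : forall u : nat -> F,
    (forall m : int, exists N, forall i j, (N <= i)%N -> (N <= j)%N -> vge v (u i - u j) m) ->
    exists l, forall m : int, exists N, forall i, (N <= i)%N -> vge v (u i - l) m;
  nlf_residue : exists s : seq F,
    [/\ all (fun r => vge v r 0) s,
        (forall i j, (i < size s)%N -> (j < size s)%N ->
           vge v (nth 0 s i - nth 0 s j) 1 -> i = j),
        (forall x, vge v x 0 -> exists2 r, r \in s & vge v (x - r) 1)
      & odd (size s)]
}.

Definition inU (v : F -> int) (m : nat) (x : F) : Prop :=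
  [/\ x != 0, v x = 0 & vge v (x - 1) m%:Z].

Definition std_addchar (v : F -> int) (psi : F -> C) : Prop :=
  [/\ forall x, psi x != 0,
      forall x y, psi (x + y) = psi x * psi y,
      forall x, vge v x 0 -> psi x = 1
    & exists2 x, vge v x (-1) & psi x != 1].

Definition canonical_inert (v : F -> int) (alpha : F) : Prop :=
  [/\ alpha != 0, v alpha = 0 & forall x : F, x ^+ 2 != - alpha].

(* E = F(sqrt(-alpha)), element x + y sqrt(-alpha) represented as the pair (x, y) *)
Definition emul (alpha : F) (p q : F * F) : F * F :=
  (p.1 * q.1 - alpha * p.2 * q.2, p.1 * q.2 + p.2 * q.1).
Definition enz (p : F * F) : bool := (p.1 != 0) || (p.2 != 0).
Definition trE (p : F * F) : F := 2%:R * p.1.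
Definition psiE (psi : F -> C) (p : F * F) : C := psi (trE p).
Definition sqrtE : F * F := (0, 1).

(* o_E and U_E^m (E unramified, so v_E(x + y sqrt(-alpha)) = min(v x, v y)) *)
Definition inOE (v : F -> int) (p : F * F) : bool := vge v p.1 0 && vge v p.2 0.
Definition inUE (v : F -> int) (m : nat) (p : F * F) : bool :=
  if m == 0%N then inOE v p && ~~ (vge v p.1 1 && vge v p.2 1)
  else vge v (p.1 - 1) m%:Z && vge v p.2 m%:Z.

Definition trivial_on_UE (v : F -> int) (theta : F * F -> C) (m : nat) : Prop :=
  forall p, inUE v m p -> theta p = 1.

Definition conductorE (v : F -> int) (theta : F * F -> C) (m : nat) : Prop :=
  trivial_on_UE v theta m /\ forall m', trivial_on_UE v theta m' -> (m <= m')%N.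

Definition charE (alpha : F) (theta : F * F -> C) : Prop :=
  (forall p, enz p -> theta p != 0) /\
  (forall p q, enz p -> enz q -> theta (emul alpha p q) = theta p * theta q).

Definition mx2 (a b c d : F) : 'M[F]_2 :=
  \matrix_(i < 2, j < 2)
    if (i : nat) == 0%N then (if (j : nat) == 0%N then a else b)
    else (if (j : nat) == 0%N then c else d).

Definition amat (y : F) : 'M[F]_2 := mx2 y 0 0 1.
Definition nmat (x : F) : 'M[F]_2 := mx2 1 x 0 1.
Definition walpha (alpha : F) : 'M[F]_2 := mx2 0 1 (- alpha) 0.
Definition torus_mx (alpha : F) (p : F * F) : 'M[F]_2 := mx2 p.1 p.2 (- alpha * p.2) p.1.

(* chi_rel k c : k lies in Z K_T(n) = T K(n) and chi_{theta,T}(k) = c,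
   via chi(t (1 + w^n g)) = theta(t) psi(w^-n a Tr(w_alpha g)), g in M_2(o) *)
Definition chi_rel (v : F -> int) (w alpha : F) (n : nat) (theta : F * F -> C)
    (psi : F -> C) (a : F) (k : 'M[F]_2) (c : C) : Prop :=
  exists (t : F * F) (g : 'M[F]_2),
    [/\ enz t, forall i j, vge v (g i j) 0,
        k = torus_mx alpha t *m (1%:M + (w ^+ n) *: g)
      & c = theta t * psi (w ^- n * a * \tr (walpha alpha *m g))].

(* functions on G = GL_2(F), represented as functions on 2x2 matrices vanishing
   off GL_2(F) *)
Definition rtrans (g : 'M[F]_2) (f : 'M[F]_2 -> C) : 'M[F]_2 -> C :=
  fun h => f (h *m g).
Definition fadd (f1 f2 : 'M[F]_2 -> C) : 'M[F]_2 -> C := fun h => f1 h + f2 h.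
Definition fscale (c : C) (f : 'M[F]_2 -> C) : 'M[F]_2 -> C := fun h => c * f h.
Definition fzero : 'M[F]_2 -> C := fun _ => 0.

Definition cInd (chi : 'M[F]_2 -> C -> Prop) (f : 'M[F]_2 -> C) : Prop :=
  [/\ forall g, g \notin unitmx -> f g = 0,
      forall k c g, chi k c -> g \in unitmx -> f (k *m g) = c * f g
    & exists s : seq 'M[F]_2, forall g, g \in unitmx -> f g != 0 ->
        exists h k c, [/\ h \in s, chi k c & g = k *m h]].

Definition fun_space (V : ('M[F]_2 -> C) -> Prop) : Prop :=
  [/\ V fzero,
      (forall f1 f2, V f1 -> V f2 -> V (fadd f1 f2)),
      (forall c f, V f -> V (fscale c f))
    & (forall W g, V W -> g \notin unitmx -> W g = 0)].

Definition intertwining_iso (chi : 'M[F]_2 -> C -> Prop) (V : ('M[F]_2 -> C) -> Prop)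
    (Phi : ('M[F]_2 -> C) -> ('M[F]_2 -> C)) : Prop :=
  [/\ (forall f, cInd chi f -> V (Phi f)),
      (forall f1 f2, cInd chi f1 -> cInd chi f2 -> Phi f1 = Phi f2 -> f1 = f2),
      (forall W, V W -> exists2 f, cInd chi f & Phi f = W),
      (forall f1 f2 c, cInd chi f1 -> cInd chi f2 ->
          Phi (fadd f1 f2) = fadd (Phi f1) (Phi f2) /\ Phi (fscale c f1) = fscale c (Phi f1))
    & (forall f g, cInd chi f -> g \in unitmx -> Phi (rtrans g f) = rtrans g (Phi f))].

Definition whittaker_model_of (psi : F -> C) (chi : 'M[F]_2 -> C -> Prop)
    (V : ('M[F]_2 -> C) -> Prop) : Prop :=
  [/\ fun_space V,
      (forall W x g, V W -> g \in unitmx -> W (nmat x *m g) = psi x * W g),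
      (forall W g, V W -> g \in unitmx -> V (rtrans g W))
    & exists Phi, intertwining_iso chi V Phi].

Definition nonzero_fun (f : 'M[F]_2 -> C) : Prop := exists g, f g != 0.

Definition trivial_central_char (V : ('M[F]_2 -> C) -> Prop) : Prop :=
  forall W z g, V W -> z != 0 -> W (g *m z%:M) = W g.

Definition inK1 (v : F -> int) (r : nat) (k : 'M[F]_2) : Prop :=
  [/\ forall i j, vge v (k i j) 0, \det k != 0, v (\det k) = 0,
      vge v (k 0 0 - 1) r%:Z & vge v (k 1 0) r%:Z].

Definition has_K1_fixed (v : F -> int) (V : ('M[F]_2 -> C) -> Prop) (r : nat) : Prop :=
  exists W, [/\ V W, nonzero_fun W & forall k g, inK1 v r k -> W (g *m k) = W g].

Definition conductorV (v : F -> int) (V : ('M[F]_2 -> C) -> Prop) (r : nat) : Prop :=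
  has_K1_fixed v V r /\ forall r', has_K1_fixed v V r' -> (r <= r')%N.

End LocalDefs.

(* Main.v *)
Require Import Defs.
From mathcomp Require Import all_boot all_order all_algebra.
From mathcomp Require Import complex.
From mathcomp Require Import Rstruct.
From mathcomp Require Import ring zify.
Import Order.TTheory GRing.Theory Num.Theory.
Local Open Scope ring_scope.
Set Implicit Arguments. Unset Strict Implicit.

Lemma mx2_mul (F : fieldType) (a b c d a' b' c' d' : F) :
  mx2 a b c d *m mx2 a' b' c' d' =
  mx2 (a*a'+b*c') (a*b'+b*d') (c*a'+d*c') (c*b'+d*d').
Proof.
apply/matrixP=> i j; rewrite !mxE !big_ord_recl big_ord0 !mxE.
by case: i => [[|[|i]] Hi] //; case: j => [[|[|j]] Hj] //=; rewrite addr0.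
Qed.

Lemma mx2_addsc (F : fieldType) (s a b c d : F) :
  1%:M + s *: mx2 a b c d = mx2 (1 + s*a) (s*b) (s*c) (1 + s*d).
Proof.
apply/matrixP=> i j; rewrite !mxE.
by case: i => [[|[|i]] Hi] //; case: j => [[|[|j]] Hj] //=; rewrite ?addr0 ?add0r.
Qed.

Lemma mx2_tr (F : fieldType) (a b c d : F) : \tr (mx2 a b c d) = a + d.
Proof. by rewrite /mxtrace !big_ord_recl big_ord0 !mxE addr0. Qed.

Lemma mx2_id (F : fieldType) : mx2 1 0 0 1 = 1%:M :> 'M[F]_2.
Proof.
apply/matrixP=> i j; rewrite !mxE.
by case: i => [[|[|i]] Hi] //; case: j => [[|[|j]] Hj].
Qed.

Lemma amat_unit (F : fieldType) (y : F) : y != 0 -> amat y \in unitmx.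
Proof.
move=> hy.
have h : amat y *m amat y^-1 = 1%:M.
  by rewrite /amat mx2_mul !mulr0 !mul0r !addr0 !add0r mulr1 divff // -mx2_id.
by case: (mulmx1_unit h).
Qed.

Lemma v1 (F : fieldType) (v : F -> int) (w : F) (HF : nonarch_local_field v w) : v 1 = 0.
Proof. have := nlf_mul HF (oner_neq0 F) (oner_neq0 F); rewrite mulr1 => h. by have := congr1 (fun z => z - v 1) h; rewrite /= addrK subrr => <-. Qed.

Lemma vN1 (F : fieldType) (v : F -> int) (w : F) (HF : nonarch_local_field v w) : v (-1) = 0.
Proof.
have h1 : (-1 : F) != 0 by rewrite oppr_eq0 oner_neq0.
have := nlf_mul HF h1 h1; rewrite mulrNN mulr1 (v1 HF); lia.
Qed.

Lemma vN (F : fieldType) (v : F -> int) (w : F) (HF : nonarch_local_field v w) x :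
  x != 0 -> v (- x) = v x.
Proof.
move=> hx; have h1 : (-1 : F) != 0 by rewrite oppr_eq0 oner_neq0.
by rewrite -mulN1r (nlf_mul HF h1 hx) (vN1 HF) add0r.
Qed.

Lemma vinv (F : fieldType) (v : F -> int) (w : F) (HF : nonarch_local_field v w) x :
  x != 0 -> v x^-1 = - v x.
Proof.
move=> hx; have hi : x^-1 != 0 by rewrite invr_eq0.
have := nlf_mul HF hx hi; rewrite divff // (v1 HF); lia.
Qed.

Lemma vexpw (F : fieldType) (v : F -> int) (w : F) (HF : nonarch_local_field v w) k :
  v (w ^+ k) = k%:Z.
Proof.
elim: k => [|k IH]; first by rewrite expr0 (v1 HF).
have hw := nlf_unif_nz HF.
rewrite exprS (nlf_mul HF hw (expf_neq0 k hw)) IH (nlf_unif HF); lia.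
Qed.

Lemma vge_le (F : fieldType) (v : F -> int) x (m m' : int) :
  m' <= m -> vge v x m -> vge v x m'.
Proof. by move=> hm; rewrite /vge; case: (x == 0) => //= h; apply: le_trans h. Qed.

Lemma vge_N (F : fieldType) (v : F -> int) (w : F) (HF : nonarch_local_field v w) x m :
  vge v x m -> vge v (- x) m.
Proof.
rewrite /vge oppr_eq0; case: (eqVneq x 0) => [->|hx] //=; by rewrite (vN HF hx).
Qed.

Lemma mulwK (F : fieldType) (w x : F) n : w != 0 -> w ^+ n * (x * w ^- n) = x.
Proof. move=> hw; rewrite mulrCA divff ?mulr1 // expf_neq0 //. Qed.
Ltac slia := repeat (match goal with H : _ |- _ => clear H end); lia.

Theorem proposition2p14
  (F : fieldType) (v : F -> int) (w : F) (HF : nonarch_local_field v w)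
  (psi : F -> C) (Hpsi : std_addchar v psi)
  (alpha : F) (Halpha : canonical_inert v alpha)
  (n : nat) (Hn : (1 <= n)%N)
  (theta : F * F -> C) (Htheta : charE alpha theta)
  (Hcond : conductorE v theta (2 * n))
  (HthetaF : forall x : F, x != 0 -> theta (x, 0) = 1)
  (a : F) (Ha0 : a != 0) (Hav : v a = 0)
  (Ha : forall u : F * F, inOE v u ->
          psiE psi (emul alpha (emul alpha (w ^- n * a, 0) (@sqrtE F)) u)
          = theta (1 + w ^+ n * u.1, w ^+ n * u.2))
  (V : ('M[F]_2 -> C) -> Prop)
  (HV : whittaker_model_of psi (chi_rel v w alpha n theta psi a) V)
  (Hcc : trivial_central_char V)
  (HapI : conductorV v V (4 * n))
  (W0 : 'M[F]_2 -> C) (HW0 : V W0) (HW0nz : nonzero_fun W0)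
  (Hmin : forall k c g, chi_rel v w alpha n theta psi a k c -> W0 (g *m k) = c * W0 g) :
  let frak_a := - a * alpha in
  exists c : C, forall y : F, y != 0 ->
    ((exists u, inU v n u /\ y = w ^- (2 * n) * frak_a * u) -> W0 (amat y) = c) /\
    (~ (exists u, inU v n u /\ y = w ^- (2 * n) * frak_a * u) -> W0 (amat y) = 0).
Proof.
Proof.
move=> frak_a.
have hw : w != 0 := nlf_unif_nz HF.
case: Halpha => hal0 hal _.
case: Hpsi => hpsi0 hpsiD hpsio [x0 hx0 hpx0].
case: HV => _ Hwh _ _.
have psi0 : psi 0 = 1 by apply: hpsio; rewrite /vge eqxx.
have th1 : theta (1, 0) = 1 by apply: HthetaF; exact: oner_neq0.
set b := w ^- (2 * n) * frak_a.
have hfa0 : frak_a != 0 by rewrite /frak_a mulf_neq0 // oppr_eq0.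
have hwn : w ^+ (2 * n) != 0 by rewrite expf_neq0.
have hb0 : b != 0 by rewrite mulf_neq0 // invr_eq0.
have vb : v b = - (2 * n)%:Z.
  rewrite /b (nlf_mul HF _ hfa0) ?invr_eq0 // (vinv HF hwn) (vexpw HF).
  rewrite /frak_a (nlf_mul HF _ hal0) ?oppr_eq0 // (vN HF Ha0) Hav hal.
  by rewrite !addr0.
have amatM : forall y u : F, amat (y * u) = amat y *m amat u.
  by move=> y u; rewrite /amat mx2_mul; congr mx2; ring.
exists (W0 (amat b)).
move=> y hy; split.
  case=> u [[hu0 hu hu1] ->].
  rewrite amatM (Hmin (amat u) 1 (amat b)) ?mul1r //.
  exists (1, 0), (mx2 ((u - 1) * w ^- n) 0 0 0); split.
  - by rewrite /enz /= oner_neq0.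
  - move=> i j; rewrite mxE.
    case: ((i : nat) == 0%N); case: ((j : nat) == 0%N); rewrite /vge ?eqxx //.
    case: (eqVneq (u - 1) 0) => [->|hu10]; first by rewrite mul0r eqxx.
    have hwi : w ^- n != 0 by rewrite invr_eq0 expf_neq0.
    rewrite mulf_eq0 (negbTE hu10) invr_eq0 expf_eq0 (negbTE hw) andbF /=.
    rewrite (nlf_mul HF hu10 hwi) (vinv HF (expf_neq0 n hw)) (vexpw HF).
    move: hu1; rewrite /vge (negbTE hu10) /=; slia.
  - rewrite /torus_mx /amat mx2_addsc mx2_mul mulwK //; congr mx2 => /=; ring.
  - rewrite /walpha mx2_mul mx2_tr th1 mul1r.
    have -> : 0 * ((u - 1) * w ^- n) + 1 * 0 + (- alpha * 0 + 0 * 0) = 0 by ring.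
    by rewrite mulr0 psi0.
move=> hnot.
case: (eqVneq (W0 (amat y)) 0) => // hW.
exfalso; apply: hnot.
have key : forall x, vge v x n -> psi ((y - b) * x) = 1.
  move=> x hx.
  have e1 : W0 (amat y *m nmat x) = psi (b * x) * W0 (amat y).
    apply: Hmin.
    exists (1, 0), (mx2 0 (x * w ^- n) 0 0); split.
    - by rewrite /enz /= oner_neq0.
    - move=> i j; rewrite mxE.
      case: ((i : nat) == 0%N); case: ((j : nat) == 0%N); rewrite /vge ?eqxx //.
      case: (eqVneq x 0) => [->|hx0']; first by rewrite mul0r eqxx.
      have hwi : w ^- n != 0 by rewrite invr_eq0 expf_neq0.
      rewrite mulf_eq0 (negbTE hx0') invr_eq0 expf_eq0 (negbTE hw) andbF /=.
      rewrite (nlf_mul HF hx0' hwi) (vinv HF (expf_neq0 n hw)) (vexpw HF).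
      move: hx; rewrite /vge (negbTE hx0') /=; slia.
    - rewrite /torus_mx /nmat mx2_addsc mx2_mul mulwK //; congr mx2 => /=; ring.
    - rewrite /walpha mx2_mul mx2_tr th1 mul1r; congr psi.
      rewrite /b /frak_a mul2n -addnn exprD invfM; ring.
  have e2 : amat y *m nmat x = nmat (y * x) *m amat y.
    by rewrite /amat /nmat !mx2_mul; congr mx2; ring.
  rewrite e2 (Hwh W0 (y * x) (amat y) HW0 (amat_unit hy)) in e1.
  have e3 := mulIf hW e1.
  have hN : psi (b * x) * psi (- (b * x)) = 1 by rewrite -hpsiD subrr.
  by rewrite mulrBl hpsiD e3 hN.
have hx00 : x0 != 0.
  by apply/eqP => h0; move: hpx0; rewrite h0 psi0 eqxx.
have hyb : vge v (y - b) (- n%:Z).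
  case: (eqVneq (y - b) 0) => [->|hyb0]; first by rewrite /vge eqxx.
  rewrite /vge (negbTE hyb0) /=.
  case: (lerP (- n%:Z) (v (y - b))) => // hlt.
  exfalso; move/negP: hpx0; apply.
  have hi : (y - b)^-1 != 0 by rewrite invr_eq0.
  have := key (x0 * (y - b)^-1).
  rewrite mulrCA divff // mulr1 => -> //.
  rewrite /vge mulf_eq0 (negbTE hx00) (negbTE hi) /=.
  rewrite (nlf_mul HF hx00 hi) (vinv HF hyb0).
  move: hlt hx0; rewrite /vge (negbTE hx00) /=; slia.
exists (y / b); split; last by rewrite mulrC divfK.
have hu1 : vge v (y / b - 1) n.
  have -> : y / b - 1 = (y - b) / b by field.
  case: (eqVneq (y - b) 0) => [->|hyb0]; first by rewrite mul0r /vge eqxx.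
  have hbi : b^-1 != 0 by rewrite invr_eq0.
  rewrite /vge mulf_eq0 (negbTE hyb0) (negbTE hbi) /=.
  rewrite (nlf_mul HF hyb0 hbi) (vinv HF hb0) vb.
  move: hyb; rewrite /vge (negbTE hyb0) /=; slia.
have hu0 : y / b != 0 by rewrite mulf_neq0 // invr_eq0.
split => //.
have hv1 := v1 HF.
have h0 : vge v (y / b) 0.
  have -> : y / b = (y / b - 1) + 1 by ring.
  apply: (nlf_add HF).
    by apply: (vge_le _ hu1); slia.
  by rewrite /vge hv1 lexx orbT.
have h1 : ~~ vge v (y / b) 1.
  apply/negP => h.
  have : vge v 1 1.
    have -> : (1 : F) = y / b + - (y / b - 1) by ring.
    apply: (nlf_add HF h); apply: (vge_N HF).
    by apply: (vge_le _ hu1); move: Hn; slia.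
  by rewrite /vge oner_eq0 hv1.
move: h0 h1; rewrite /vge (negbTE hu0) /=; slia.
Qed.
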